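(* Let $A\in\mathbb{R}^{n\times n}$, $B\in\mathbb{R}^{n\times m}$, $0\le\gamma\le1$, $D\in\mathbb{S}^n$, $E\in\mathbb{S}^m$, $d\in\mathbb{R}^n$, $K^\dagger\in\mathbb{R}^{m\times n}$ and $k^\dagger\in\mathbb{R}^m$ be given. Then the optimization problem $$\begin{aligned}\min_{\tilde D,\tilde d,\tilde E,P,h}\ & \|\tilde D-D\|_F+\|\tilde d-d\|_2+\|\tilde E-E\|_F\\ \text{s.t. }\ & P=\tilde D+\gamma A'PA-{K^\dagger}'(\tilde E+\gamma B'PB)K^\dagger,\\ & (\tilde E+\gamma B'PB)K^\dagger=-\gamma B'PA,\\ & h=\tilde d+\gamma(A+BK^\dagger)'h,\\ & 2(\tilde E+\gamma B'PB)k^\dagger=-\gamma B'h,\\ & P\succeq0,\ \tilde D\succ0,\ \tilde E\succ0,\end{aligned}$$ over symmetric $\tilde D\in\mathbb{S}^n$, $P\in\mathbb{S}^n$, $\tilde E\in\mathbb{S}^m$ and vectors $\tilde d,h\in\mathbb{R}^n$, is convex.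
   Context: Prime denotes transpose; $\|\cdot\|_F$ is the Frobenius norm; $\mathbb{S}^n$ is the set of real symmetric $n\times n$ matrices; $\succeq0$ ($\succ0$) means positive semidefinite (definite). This is the attacker's problem of finding minimally changed cost parameters making the affine policy $u=K^\dagger x+k^\dagger$ optimal for the discounted LQG problem. *)

(* Defs.v *)
From HB Require Import structures.
From mathcomp Require Import all_boot all_order all_algebra.
Set Implicit Arguments. Unset Strict Implicit. Unset Printing Implicit Defensive.
Import Order.TTheory GRing.Theory Num.Theory.
Local Open Scope ring_scope.

Section LQG.
Variable R : rcfType.

Definition symmx n (M : 'M[R]_n) : Prop := M^T = M.
Definition psdmx n (M : 'M[R]_n) : Prop :=
  symmx M /\ forall x : 'cV[R]_n, 0 <= (x^T *m M *m x) 0 0.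
Definition pdmx n (M : 'M[R]_n) : Prop :=
  symmx M /\ forall x : 'cV[R]_n, x != 0 -> 0 < (x^T *m M *m x) 0 0.

(* Frobenius norm (also the Euclidean 2-norm for column vectors) *)
Definition frob p q (M : 'M[R]_(p, q)) : R :=
  Num.sqrt (\sum_(i < p) \sum_(j < q) M i j ^+ 2).

(* decision variables (Dt, dt, Et, P, h) *)
Definition vars n m : Type :=
  ('M[R]_n * 'cV[R]_n * 'M[R]_m * 'M[R]_n * 'cV[R]_n)%type.

Definition vcomb n m (t : R) (x y : vars n m) : vars n m :=
  let: (D1, d1, E1, P1, h1) := x in
  let: (D2, d2, E2, P2, h2) := y in
  (t *: D1 + (1 - t) *: D2, t *: d1 + (1 - t) *: d2,
   t *: E1 + (1 - t) *: E2, t *: P1 + (1 - t) *: P2,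
   t *: h1 + (1 - t) *: h2).

Definition attack_obj n m (D : 'M[R]_n) (d : 'cV[R]_n) (E : 'M[R]_m)
  (x : vars n m) : R :=
  let: (Dt, dt, Et, P, h) := x in
  frob (Dt - D) + frob (dt - d) + frob (Et - E).

Definition attack_feasible n m (A : 'M[R]_n) (B : 'M[R]_(n, m)) (gamma : R)
  (Kd : 'M[R]_(m, n)) (kd : 'cV[R]_m) (x : vars n m) : Prop :=
  let: (Dt, dt, Et, P, h) := x in
  [/\ [/\ symmx Dt, symmx P & symmx Et],
      P = Dt + gamma *: (A^T *m P *m A)
            - Kd^T *m (Et + gamma *: (B^T *m P *m B)) *m Kd,
      (Et + gamma *: (B^T *m P *m B)) *m Kd = - (gamma *: (B^T *m P *m A)),
      h = dt + gamma *: ((A + B *m Kd)^T *m h)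
    & [/\           2%:R *: ((Et + gamma *: (B^T *m P *m B)) *m kd)
             = - (gamma *: (B^T *m h)),
          psdmx P, pdmx Dt & pdmx Et]].

Definition convex_problem n m (feas : vars n m -> Prop) (obj : vars n m -> R)
  : Prop :=
  (forall (t : R) (x y : vars n m), 0 <= t <= 1 ->
      feas x -> feas y -> feas (vcomb t x y)) /\
  (forall (t : R) (x y : vars n m), 0 <= t <= 1 ->
      obj (vcomb t x y) <= t * obj x + (1 - t) * obj y).

End LQG.

(* Main.v *)
Require Import Defs.
From mathcomp Require Import all_boot all_order all_algebra.
From mathcomp Require Import ring lra.
Import Order.TTheory GRing.Theory Num.Theory.
Local Open Scope ring_scope.

Section Helpers.
Variable R : rcfType.

Lemma cs_ineq (I : finType) (x y : I -> R) :
  (\sum_i x i * y i) ^+ 2 <= (\sum_i x i ^+ 2) * (\sum_i y i ^+ 2).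
Proof.
set a := \sum_i x i ^+ 2; set b := \sum_i x i * y i; set c := \sum_i y i ^+ 2.
have a0 : 0 <= a by apply: sumr_ge0 => i _; exact: sqr_ge0.
have key : forall s, 0 <= s ^+ 2 * a + 2 * s * b + c.
  move=> s.
  have -> : s ^+ 2 * a + 2 * s * b + c = \sum_i (s * x i + y i) ^+ 2.
    rewrite (eq_bigr (fun i => s ^+ 2 * x i ^+ 2 + 2 * s * (x i * y i) + y i ^+ 2));
      last by move=> i _; ring.
    by rewrite !big_split /= -!mulr_sumr.
  by apply: sumr_ge0 => i _; exact: sqr_ge0.
rewrite le_eqVlt in a0; case/orP: a0 => [/eqP a0|a0].
  have hx : forall i, x i = 0.
    move=> i; apply/eqP; rewrite -sqrf_eq0; apply/eqP.
    apply: (@psumr_eq0P _ _ predT (fun i => x i ^+ 2)) => //.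
    by move=> j _; exact: sqr_ge0.
  have -> : b = 0 by rewrite /b big1 // => i _; rewrite hx mul0r.
  by rewrite -a0 expr0n /= mul0r.
have := key (- b / a).
have -> : (- b / a) ^+ 2 * a + 2 * (- b / a) * b + c = c - b ^+ 2 / a.
  by field; rewrite gt_eqF.
by rewrite subr_ge0 ler_pdivrMr // mulrC.
Qed.

Lemma tri_ineq (I : finType) (x y : I -> R) :
  Num.sqrt (\sum_i (x i + y i) ^+ 2) <=
  Num.sqrt (\sum_i x i ^+ 2) + Num.sqrt (\sum_i y i ^+ 2).
Proof.
set a := \sum_i x i ^+ 2; set b := \sum_i x i * y i; set c := \sum_i y i ^+ 2.
have a0 : 0 <= a by apply: sumr_ge0 => i _; exact: sqr_ge0.
have c0 : 0 <= c by apply: sumr_ge0 => i _; exact: sqr_ge0.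
have r0 : 0 <= Num.sqrt a + Num.sqrt c by rewrite addr_ge0 // sqrtr_ge0.
rewrite -[X in _ <= X]ger0_norm // -sqrtr_sqr ler_sqrt ?sqr_ge0 //.
have -> : \sum_i (x i + y i) ^+ 2 = a + 2 * b + c.
  rewrite (eq_bigr (fun i => x i ^+ 2 + 2 * (x i * y i) + y i ^+ 2));
    last by move=> i _; ring.
  by rewrite !big_split /= -!mulr_sumr.
have -> : (Num.sqrt a + Num.sqrt c) ^+ 2
   = Num.sqrt a ^+ 2 + 2 * (Num.sqrt a * Num.sqrt c) + Num.sqrt c ^+ 2 by ring.
rewrite !sqr_sqrtr // -sqrtrM //.
have : b <= Num.sqrt (a * c).
  apply: (le_trans (ler_norm b)).
  by rewrite -sqrtr_sqr ler_sqrt ?mulr_ge0 // cs_ineq.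
lra.
Qed.

Lemma frob_sum p q (M : 'M[R]_(p, q)) :
  frob M = Num.sqrt (\sum_(ij : 'I_p * 'I_q) M ij.1 ij.2 ^+ 2).
Proof. by rewrite /frob pair_big. Qed.

Lemma frob_triangle p q (M N : 'M[R]_(p, q)) : frob (M + N) <= frob M + frob N.
Proof.
rewrite !frob_sum.
rewrite (eq_bigr (fun ij => (M ij.1 ij.2 + N ij.1 ij.2) ^+ 2)); last by move=> ij _; rewrite mxE.
exact: tri_ineq.
Qed.

Lemma frob_scale p q (t : R) (M : 'M[R]_(p, q)) : 0 <= t -> frob (t *: M) = t * frob M.
Proof.
move=> t0; rewrite !frob_sum.
rewrite (eq_bigr (fun ij => t ^+ 2 * M ij.1 ij.2 ^+ 2)); last by move=> ij _; rewrite mxE exprMn.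
by rewrite -mulr_sumr sqrtrM ?sqr_ge0 // sqrtr_sqr ger0_norm.
Qed.

Lemma comb_sub (V : lmodType R) (t : R) (a b c : V) :
  t *: a + (1 - t) *: b - c = t *: (a - c) + (1 - t) *: (b - c).
Proof.
by rewrite !scalerBr [RHS]addrACA -opprD -scalerDl [t + _]addrC subrK scale1r.
Qed.

Lemma frob_convex p q (t : R) (X Y C : 'M[R]_(p, q)) : 0 <= t <= 1 ->
  frob (t *: X + (1 - t) *: Y - C) <= t * frob (X - C) + (1 - t) * frob (Y - C).
Proof.
case/andP=> t0 t1.
rewrite comb_sub.
have s0 : 0 <= 1 - t by rewrite subr_ge0.
rewrite -(frob_scale _ _ _ (X - C) t0) -(frob_scale _ _ _ (Y - C) s0).
exact: frob_triangle.
Qed.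

Lemma cD (V : lmodType R) (t s : R) (a b c d : V) :
  (t *: a + s *: b) + (t *: c + s *: d) = t *: (a + c) + s *: (b + d).
Proof. by rewrite !scalerDr addrACA. Qed.
Lemma cN (V : lmodType R) (t s : R) (a b : V) :
  - (t *: a + s *: b) = t *: (- a) + s *: (- b).
Proof. by rewrite opprD !scalerN. Qed.
Lemma cZ (V : lmodType R) (t s k : R) (a b : V) :
  k *: (t *: a + s *: b) = t *: (k *: a) + s *: (k *: b).
Proof. by rewrite scalerDr !scalerA mulrC [k * s]mulrC. Qed.
Lemma cL p q r (X : 'M[R]_(p, q)) (t s : R) (a b : 'M[R]_(q, r)) :
  X *m (t *: a + s *: b) = t *: (X *m a) + s *: (X *m b).
Proof. by rewrite mulmxDr !scalemxAr. Qed.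
Lemma cR p q r (Y : 'M[R]_(q, r)) (t s : R) (a b : 'M[R]_(p, q)) :
  (t *: a + s *: b) *m Y = t *: (a *m Y) + s *: (b *m Y).
Proof. by rewrite mulmxDl !scalemxAl. Qed.
Lemma cT p q (t s : R) (a b : 'M[R]_(p, q)) :
  (t *: a + s *: b)^T = t *: a^T + s *: b^T.
Proof. by rewrite linearD !linearZ. Qed.

Lemma comb_eq (V : lmodType R) (t s : R) (a b c d : V) :
  a = c -> b = d -> t *: a + s *: b = t *: c + s *: d.
Proof. by move=> -> ->. Qed.

Lemma pos_comb (t x y : R) : 0 <= t <= 1 -> 0 < x -> 0 < y -> 0 < t * x + (1 - t) * y.
Proof. move=> /andP[t0 t1] x0 y0; nra. Qed.

End Helpers.

Theorem proposition3 (R : rcfType) (n m : nat)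
  (A : 'M[R]_n) (B : 'M[R]_(n, m)) (gamma : R)
  (D : 'M[R]_n) (E : 'M[R]_m) (d : 'cV[R]_n)
  (Kd : 'M[R]_(m, n)) (kd : 'cV[R]_m) :
  0 <= gamma <= 1 -> symmx D -> symmx E ->
  convex_problem (attack_feasible A B gamma Kd kd) (attack_obj D d E).
Proof.
move=> _ _ _; split.
  move=> t [[[[D1 d1] E1] P1] h1] [[[[D2 d2] E2] P2] h2] ht /=.
  case=> [[sD1 sP1 sE1] e11 e21 e31 [e41 [_ pP1] [_ pD1] [_ pE1]]].
  case=> [[sD2 sP2 sE2] e12 e22 e32 [e42 [_ pP2] [_ pD2] [_ pE2]]].
  split.
  - by rewrite /symmx !cT sD1 sP1 sE1 sD2 sP2 sE2.
  - rewrite !(cL, cR, cZ, cN, cD). exact: comb_eq.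
  - rewrite !(cL, cR, cZ, cN, cD). exact: comb_eq.
  - rewrite !(cL, cR, cZ, cN, cD). exact: comb_eq.
  split.
  - rewrite !(cL, cR, cZ, cN, cD). exact: comb_eq.
  - split; first by rewrite /symmx cT sP1 sP2.
    move=> x; move: (pP1 x) (pP2 x); rewrite cL cR !mxE => a1 a2.
    case/andP: ht => t0 t1.
    by rewrite addr_ge0 // mulr_ge0 ?subr_ge0.
  - split; first by rewrite /symmx cT sD1 sD2.
    move=> x x0; move: (pD1 x x0) (pD2 x x0); rewrite cL cR !mxE; exact: pos_comb.
  - split; first by rewrite /symmx cT sE1 sE2.
    move=> x x0; move: (pE1 x x0) (pE2 x x0); rewrite cL cR !mxE; exact: pos_comb.
move=> t [[[[D1 d1] E1] P1] h1] [[[[D2 d2] E2] P2] h2] ht /=.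
have := frob_convex _ _ _ _ D1 D2 D ht.
have := frob_convex _ _ _ _ d1 d2 d ht.
have := frob_convex _ _ _ _ E1 E2 E ht.
lra.
Qed.
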